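(* Consider the problem $\min_{x\in\mathbb{R}^n} F(x):=f(x)+g(x)$ subject to $Ax=b$, under the setting described in the context, with optimal solution $x^*$ and with $\lambda^*$ an optimal solution of $\max_\lambda d(\lambda)$ such that $d(\lambda^* )=F(x^* )$. Let $\{x^k\}$ and $\{\lambda^k\}$ be generated by the IAL framework described in the context with $\eta_k=\frac{\sigma}{k^2}$ for some constant $\sigma>0$. Then, with $\delta_k:=d(\lambda^* )-d(\lambda^k)$, $$\delta_k=\mathcal{O}\!\left(\frac1k\right),\qquad \|Ax^{k+1}-b\|^2=\mathcal{O}\!\left(\frac1k\right),\qquad |F(x^{k+1})-F(x^* )|=\mathcal{O}\!\left(\frac1{\sqrt k}\right).$$
   Context: Let $A\in\mathbb{R}^{m\times n}$ and $b\in\mathbb{R}^m$. Let $f:\mathbb{R}^n\to\mathbb{R}$ be convex and differentiable with Lipschitz continuous gradient. Let $g:\mathbb{R}^n\to\mathbb{R}\cup\{+\infty\}$ be a closed proper convex (possibly nonsmooth) function with bounded domain, and $F=f+g$. Fix a penalty parameter $\beta>0$. For $\lambda\in\mathbb{R}^m$, define $$\hat f_\beta(x;\lambda):=f(x)+\langle\lambda,Ax-b\rangle+\tfrac{\beta}{2}\|Ax-b\|^2,\qquad \mathcal{L}_\beta(x;\lambda):=\hat f_\beta(x;\lambda)+g(x),$$ and $d(\lambda):=\min_{x\in\mathbb{R}^n}\mathcal{L}_\beta(x;\lambda)$. Here $\nabla\hat f_\beta(x;\lambda)$ denotes the gradient of $\hat f_\beta$ with respect to $x$. It is assumed that strong duality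 holds between the problem and its augmented Lagrangian dual $\max_\lambda d(\lambda)$. IAL framework: choose $x^1\in\operatorname{dom} g$, $\lambda^1\in\mathbb{R}^m$, and a nonnegative sequence $\{\eta_k\}$. For $k=1,2,\dots$: find a point $x^{k+1}$ such that $$\max_{x\in\mathbb{R}^n}\Big\{\langle\nabla\hat f_\beta(x^{k+1};\lambda^k),\,x^{k+1}-x\rangle+g(x^{k+1})-g(x)\Big\}\le\eta_k,$$ and then set $\lambda^{k+1}=\lambda^k+\beta(Ax^{k+1}-b)$. *)

(* Defs.v *)
From HB Require Import structures.
From mathcomp Require Import all_boot all_order all_algebra.
From mathcomp Require Import all_classical all_reals all_analysis.
Set Implicit Arguments. Unset Strict Implicit. Unset Printing Implicit Defensive.
Import Order.TTheory GRing.Theory Num.Theory.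
Import numFieldNormedType.Exports.
Local Open Scope classical_set_scope.
Local Open Scope ring_scope.

Section Defs.
Variable R : realType.

Definition vdot n (u v : 'cV[R]_n) : R := \sum_(i < n) u i 0 * v i 0.
Definition vnorm n (u : 'cV[R]_n) : R := Num.sqrt (vdot u u).

Definition convex_fun n (f : 'cV[R]_n -> R) : Prop :=
  forall (x y : 'cV[R]_n) (t : R), 0 <= t <= 1 ->
    f (t *: x + (1 - t) *: y) <= t * f x + (1 - t) * f y.

Definition has_gradient n (f : 'cV[R]_n -> R) (gf : 'cV[R]_n -> 'cV[R]_n) : Prop :=
  forall x : 'cV[R]_n, differentiable f x /\ forall h, 'd f x h = vdot (gf x) h.

Definition lipschitz_map n (gf : 'cV[R]_n -> 'cV[R]_n) : Prop :=
  exists L : R, forall x y, vnorm (gf x - gf y) <= L * vnorm (x - y).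

Definition proper_efun n (g : 'cV[R]_n -> \bar R) : Prop :=
  (forall x, g x != -oo%E) /\ exists x, (g x < +oo)%E.

Definition convex_efun n (g : 'cV[R]_n -> \bar R) : Prop :=
  forall (x y : 'cV[R]_n) (t : R), 0 <= t <= 1 ->
    (g x < +oo)%E -> (g y < +oo)%E ->
    (g (t *: x + (1 - t) *: y)%R <= t%:E * g x + (1 - t)%:E * g y)%E.

Definition closed_efun n (g : 'cV[R]_n -> \bar R) : Prop :=
  closed [set p : 'cV[R]_n * R | (g p.1 <= p.2%:E)%E].

Definition bounded_dom n (g : 'cV[R]_n -> \bar R) : Prop :=
  exists M : R, forall x, (g x < +oo)%E -> vnorm x <= M.

Definition Fobj n (f : 'cV[R]_n -> R) (g : 'cV[R]_n -> \bar R) (x : 'cV[R]_n) : \bar R :=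
  ((f x)%:E + g x)%E.

Definition fhat m n (f : 'cV[R]_n -> R) (A : 'M[R]_(m, n)) (b : 'cV[R]_m)
  (beta : R) (lam : 'cV[R]_m) (x : 'cV[R]_n) : R :=
  f x + vdot lam (A *m x - b) + beta / 2 * vdot (A *m x - b) (A *m x - b).

Definition grad_fhat m n (gf : 'cV[R]_n -> 'cV[R]_n) (A : 'M[R]_(m, n)) (b : 'cV[R]_m)
  (beta : R) (lam : 'cV[R]_m) (x : 'cV[R]_n) : 'cV[R]_n :=
  gf x + A^T *m lam + beta *: (A^T *m (A *m x - b)).

Definition augLag m n (f : 'cV[R]_n -> R) (g : 'cV[R]_n -> \bar R) (A : 'M[R]_(m, n))
  (b : 'cV[R]_m) (beta : R) (lam : 'cV[R]_m) (x : 'cV[R]_n) : \bar R :=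
  ((fhat f A b beta lam x)%:E + g x)%E.

Definition dualfun m n (f : 'cV[R]_n -> R) (g : 'cV[R]_n -> \bar R) (A : 'M[R]_(m, n))
  (b : 'cV[R]_m) (beta : R) (lam : 'cV[R]_m) : \bar R :=
  ereal_inf (range (augLag f g A b beta lam)).

(* the IAL framework: x^1 in dom g, and for k >= 1 the inexact step and
   multiplier update; the "max_x {...} <= eta_k" is written as "for all x". *)
Definition IAL_iterates m n (f : 'cV[R]_n -> R) (gf : 'cV[R]_n -> 'cV[R]_n)
  (g : 'cV[R]_n -> \bar R) (A : 'M[R]_(m, n)) (b : 'cV[R]_m) (beta : R)
  (eta : nat -> R) (x : nat -> 'cV[R]_n) (lam : nat -> 'cV[R]_m) : Prop :=
  (g (x 1%N) < +oo)%E /\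
  forall k : nat, (1 <= k)%N ->
    (forall z : 'cV[R]_n,
       ((vdot (grad_fhat gf A b beta (lam k) (x k.+1)) (x k.+1 - z)%R)%:E
          + g (x k.+1) - g z <= (eta k)%:E)%E) /\
    lam k.+1 = lam k + beta *: (A *m x k.+1 - b).

End Defs.

(* Main.v *)
Require Import Defs.
From HB Require Import structures.
From mathcomp Require Import all_boot all_order all_algebra.
From mathcomp Require Import all_classical all_reals all_analysis.
From mathcomp Require Import ring lra.
Import Order.TTheory GRing.Theory Num.Theory.
Import numFieldNormedType.Exports.
Local Open Scope classical_set_scope.
Local Open Scope ring_scope.

Set Implicit Arguments. Unset Strict Implicit.
Section S.
Variable R : realType.
Implicit Types (k : nat).

Lemma vdotC k (u v : 'cV[R]_k) : vdot u v = vdot v u.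
Proof. by rewrite /vdot; apply: eq_bigr => i _; rewrite mulrC. Qed.
Lemma vdotDl k (u v w : 'cV[R]_k) : vdot (u + v) w = vdot u w + vdot v w.
Proof. by rewrite /vdot -big_split; apply: eq_bigr => i _; rewrite !mxE mulrDl. Qed.
Lemma vdotNl k (u w : 'cV[R]_k) : vdot (- u) w = - vdot u w.
Proof. by rewrite /vdot -sumrN; apply: eq_bigr => i _; rewrite !mxE mulNr. Qed.
Lemma vdotZl k (a : R) (u w : 'cV[R]_k) : vdot (a *: u) w = a * vdot u w.
Proof. by rewrite /vdot mulr_sumr; apply: eq_bigr => i _; rewrite !mxE mulrA. Qed.
Lemma vdotBl k (u v w : 'cV[R]_k) : vdot (u - v) w = vdot u w - vdot v w.
Proof. by rewrite vdotDl vdotNl. Qed.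
Lemma vdotDr k (u v w : 'cV[R]_k) : vdot w (u + v) = vdot w u + vdot w v.
Proof. by rewrite vdotC vdotDl !(vdotC w). Qed.
Lemma vdotNr k (u w : 'cV[R]_k) : vdot w (- u) = - vdot w u.
Proof. by rewrite vdotC vdotNl vdotC. Qed.
Lemma vdotZr k (a : R) (u w : 'cV[R]_k) : vdot w (a *: u) = a * vdot w u.
Proof. by rewrite vdotC vdotZl vdotC. Qed.
Lemma vdotBr k (u v w : 'cV[R]_k) : vdot w (u - v) = vdot w u - vdot w v.
Proof. by rewrite vdotDr vdotNr. Qed.
Lemma vdot_ge0 k (u : 'cV[R]_k) : 0 <= vdot u u.
Proof. by rewrite /vdot; apply: sumr_ge0 => i _; rewrite -expr2 sqr_ge0. Qed.
Lemma vdot_mul p q (M : 'M[R]_(p, q)) (l : 'cV[R]_p) (y : 'cV[R]_q) :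
  vdot (M^T *m l) y = vdot l (M *m y).
Proof.
rewrite /vdot; under eq_bigr do rewrite !mxE big_distrl /=.
rewrite exchange_big /=; apply: eq_bigr => i _; rewrite !mxE big_distrr /=.
by apply: eq_bigr => j _; rewrite !mxE; ring.
Qed.
Lemma vdot_young k (a b : 'cV[R]_k) (t : R) : 0 < t ->
  2 * vdot a b <= t * vdot a a + vdot b b / t.
Proof.
move=> t0; have := vdot_ge0 (t *: a - b).
rewrite !(vdotBl, vdotBr, vdotZl, vdotZr) (vdotC b a) => H.
have -> : t * vdot a a + vdot b b / t = (t * (t * vdot a a) + vdot b b) / t.
  by field; rewrite gt_eqF.
rewrite ler_pdivlMr //; lra.
Qed.
Lemma grad_ineq n (f : 'cV[R]_n -> R) gf : convex_fun f -> has_gradient f gf ->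
  forall x z, f x + vdot (gf x) (z - x) <= f z.
Proof.
move=> cf hg x z; set h := z - x.
have [dfx dfe] := hg x.
rewrite -dfe -deriveE //.
have hd : derivable f x h by apply: diff_derivable.
rewrite addrC -lerBrDr; set c := f z - f x.
rewrite leNgt; apply/negP => Hc.
have H : (fun t : R => t^-1 *: ((f \o shift x) (t *: h) - f x)) @ 0^' --> 'D_h f x := hd.
have H3 := cvgr_gt _ H c Hc.
have H4 : \forall t \near 0^'+, c < t^-1 *: ((f \o shift x) (t *: h) - f x).
  move: (H3 (dnbhs_filter _)); rewrite !near_withinE; apply: filterS => t Ht t0; apply: Ht.
  by rewrite gt_eqF.
have : \forall t \near 0^'+, (0 < t < 1) /\ c < t^-1 *: ((f \o shift x) (t *: h) - f x).
  near=> t; split; last by near: t.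
  apply/andP; split; near: t; [exact: nbhs_right_gt| exact: nbhs_right_lt].
move=> /filter_ex [t [/andP [t0 t1] Ht]].
move: Ht; apply/negP; rewrite -leNgt /=.
have := cf z x t; rewrite (ltW t0) (ltW t1) /= => /(_ isT).
have -> : t *: z + (1 - t) *: x = t *: h + x.
  by rewrite /h scalerBr scalerBl scale1r addrCA addrC.
move=> Hf.
rewrite /GRing.scale /= ler_pdivrMl //.
rewrite /c; lra.
Unshelve. all: by end_near.
Qed.

Lemma step m n (A : 'M[R]_(m,n)) b (f : 'cV[R]_n -> R) gf (g : 'cV[R]_n -> \bar R)
  beta (l : 'cV[R]_m) x' eta :
  convex_fun f -> has_gradient f gf -> 0 < beta -> (forall z, g z != -oo%E) ->
  (exists z, (g z < +oo)%E) ->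
  (forall z, ((vdot (grad_fhat gf A b beta l x') (x' - z))%:E + g x' - g z <= eta%:E)%E) ->
  exists G : R, g x' = G%:E /\
   (forall z, ((fhat f A b beta l x' + G - eta)%:E <= augLag f g A b beta l z)%E) /\
   (forall z, ((f x' + G + vdot (l + beta *: (A *m x' - b)) (A *m x' - b) - eta)%:E
        <= augLag f g A b beta (l + beta *: (A *m x' - b)) z)%E).
Proof.
move=> cf hg b0 gN [z0 z0f] H.
have [G gx] : exists G, g x' = G%:E.
  case E: (g x') => [G| |]; first by exists G.
  - have := H z0; rewrite E; case E0: (g z0) => [G0| |] /=.
    + by rewrite leNgt ltey.
    + by rewrite E0 in z0f.
    + by have := gN z0; rewrite E0.
  - by have := gN x'; rewrite E.
exists G; split => //.
have key : forall z Gz, g z = Gz%:E ->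
  (fhat f A b beta l x' + G - eta <= fhat f A b beta l z + Gz) /\
  (f x' + G + vdot (l + beta *: (A *m x' - b)) (A *m x' - b) - eta <=
     fhat f A b beta (l + beta *: (A *m x' - b)) z + Gz).
  move=> z Gz E.
  have := H z; rewrite gx E -EFinN -!EFinD lee_fin => Hz.
  have Hf := grad_ineq cf hg x' z.
  have e : A *m x' - A *m z = (A *m x' - b) - (A *m z - b).
    by rewrite opprB addrA subrK.
  move: Hz; rewrite /grad_fhat !vdotDl vdotZl !vdot_mul mulmxBr e.
  move: Hf; rewrite /fhat.
  move: (A *m x' - b) (A *m z - b) => r1 r2.
  have q1 := vdot_ge0 (r2 - r1).
  have q2 := vdot_ge0 r2.
  move: q1; rewrite !(vdotBl, vdotBr, vdotDl, vdotDr, vdotZl, vdotZr) (vdotC r2 r1).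
  move=> q1 Hf Hz.
  have q3 : 0 <= beta * (vdot r2 r2 - vdot r1 r2 - (vdot r1 r2 - vdot r1 r1)).
    by apply: mulr_ge0 => //; apply: ltW.
  have q4 : 0 <= beta * vdot r2 r2 by apply: mulr_ge0 => //; apply: ltW.
  split; nra.
split=> z; case E: (g z) => [Gz| |].
- by rewrite /augLag E -EFinD lee_fin; case: (key z Gz E).
- by rewrite /augLag E /= leey.
- by have := gN z; rewrite E.
- by rewrite /augLag E -EFinD lee_fin; case: (key z Gz E).
- by rewrite /augLag E /= leey.
- by have := gN z; rewrite E.
Qed.
Lemma N1 (K sigma : R) : 1 <= K -> 0 <= sigma ->
  sigma / K ^+ 2 + 2 * sigma / (K + 1) <= 2 * sigma / K.
Proof.
move=> K1 s0; have K0 : 0 < K by exact: lt_le_trans ltr01 K1.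
rewrite -subr_ge0.
have -> : 2 * sigma / K - (sigma / K ^+ 2 + 2 * sigma / (K + 1)) =
  sigma * (K - 1) / (K ^+ 2 * (K + 1)).
  by field; apply/andP; split; rewrite gt_eqF // ?ltr_wpDl //; lra.
apply: divr_ge0; first by apply: mulr_ge0 => //; lra.
by apply: mulr_ge0; [rewrite sqr_ge0|lra].
Qed.

Lemma N2 (K sigma : R) : 1 <= K -> 0 <= sigma ->
  (K - 1) * K / 2 * (sigma / K ^+ 2) + K * (sigma / K ^+ 2) <= sigma.
Proof.
move=> K1 s0; have K0 : 0 < K by exact: lt_le_trans ltr01 K1.
have -> : (K - 1) * K / 2 * (sigma / K ^+ 2) + K * (sigma / K ^+ 2) =
  sigma * (K + 1) / (2 * K) by field; rewrite gt_eqF.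
rewrite ler_pdivrMr; last lra.
nra.
Qed.

Lemma N3 (K sigma : R) : 1 <= K -> 0 <= sigma -> K * (sigma / K ^+ 2) <= sigma.
Proof.
move=> K1 s0; have K0 : 0 < K by exact: lt_le_trans ltr01 K1.
have -> : K * (sigma / K ^+ 2) = sigma / K by field; rewrite gt_eqF.
rewrite ler_pdivrMr //; nra.
Qed.

Lemma seq_rates (sigma : R) (del a s : nat -> R) :
 0 < sigma ->
 (forall k, (1 <= k)%N -> 0 <= del k) -> (forall k, 0 <= a k) -> (forall k, 0 <= s k) ->
 (forall k, (1 <= k)%N -> del k.+1 <= del k - s k + sigma / k%:R ^+ 2) ->
 (forall k, (1 <= k)%N -> del k.+1 <= a k - a k.+1 + sigma / k%:R ^+ 2) ->
 exists Ab c, 0 <= c /\ (forall k, (1 <= k)%N -> a k <= Ab) /\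
   (forall k, (2 <= k)%N -> k%:R * del k <= c) /\
   (forall k, (2 <= k)%N -> k%:R * s k <= c).
Proof.
move=> s0 d0 a0 sp H1 H2.
have ae : forall k, (1 <= k)%N -> a k.+1 + 2 * sigma / k.+1%:R <= a k + 2 * sigma / k%:R.
  move=> k k1; have := H2 k k1; have := d0 k.+1 isT.
  have K1 : 1 <= k%:R :> R by rewrite ler1n.
  have := N1 K1 (ltW s0); rewrite -[k.+1%:R]natr1; lra.
have aB' : forall k, (1 <= k)%N -> a k + 2 * sigma / k%:R <= a 1%N + 2 * sigma.
  elim => [//|k IH] _; case: k IH => [|k] IH; first by rewrite divr1.
  exact: le_trans (ae k.+1 isT) (IH isT).
have aB : forall k, (1 <= k)%N -> a k <= a 1%N + 2 * sigma.
  move=> k k1; have := aB' k k1.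
  have : 0 <= 2 * sigma / k%:R by apply: divr_ge0 => //; lra.
  lra.
set Ab := a 1%N + 2 * sigma.
have P : forall M, M%:R * (M%:R + 1) / 2 * del M.+1 + M%:R * a M.+1 <= M%:R * (Ab + sigma).
  elim => [|M IH]; first by rewrite !mul0r !add0r.
  have K1 : 1 <= M.+1%:R :> R by rewrite ler1n.
  have F1 : (M.+1%:R - 1) * M.+1%:R / 2 * del M.+2 <=
            (M.+1%:R - 1) * M.+1%:R / 2 * (del M.+1 + sigma / M.+1%:R ^+ 2).
    apply: ler_wpM2l; first by apply: divr_ge0 => //; apply: mulr_ge0; lra.
    have := H1 M.+1 isT; have := sp M.+1; set t := sigma / _; lra.
  have F2 : M.+1%:R * del M.+2 <= M.+1%:R * (a M.+1 - a M.+2 + sigma / M.+1%:R ^+ 2).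
    by apply: ler_wpM2l; [lra| exact: H2].
  have F3 := N2 K1 (ltW s0).
  have F4 : a M.+1 <= Ab := aB M.+1 isT.
  move: F1 F2 F3 IH; set t := sigma / _; rewrite -[M.+1%:R]natr1; move: F4; clearbody Ab t; move: (M%:R : R) (del M.+2) (del M.+1) (a M.+1) (a M.+2) => K d2 d1 a1 a2; lra.
have cge : 0 <= Ab + sigma by rewrite /Ab; have := a0 1%N; lra.
exists Ab, (2 * (Ab + sigma) + sigma); split; first lra.
split; first exact: aB.
have Dk : forall k, (2 <= k)%N -> k%:R * del k <= 2 * (Ab + sigma).
  case=> [|[|M]] // _.
  have := P M.+1; have := a0 M.+2; have : 0 <= M.+1%:R :> R by [].
  move=> h0 h1 h2.
  have h3 : M.+1%:R * ((M.+1%:R + 1) / 2 * del M.+2) <= M.+1%:R * (Ab + sigma).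
    by have := mulr_ge0 h0 h1; rewrite !mulrA; lra.
  have Mp : 0 < M.+1%:R :> R by [].
  move: h3; rewrite ler_pM2l // -natr1 => h3.
  have -> : M.+2%:R = M.+1%:R + 1 :> R by rewrite -natr1.
  lra.
split.
  by move=> k k2; have := Dk k k2; lra.
move=> k k2.
have k1 : (1 <= k)%N by apply: leq_trans k2.
have K1 : 1 <= k%:R :> R by rewrite ler1n.
have K0 : 0 <= k%:R :> R by [].
have h := H1 k k1; have := d0 k.+1 isT => h'.
have h2 : k%:R * s k <= k%:R * (del k + sigma / k%:R ^+ 2) by apply: ler_wpM2l => //; lra.
have := N3 K1 (ltW s0); have := Dk k k2; lra.
Qed.

Lemma young_abs k (u r : 'cV[R]_k) (K U Cr : R) : 1 <= K -> vdot u u <= U ->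
  K * vdot r r <= Cr -> 2 * `|vdot u r| <= (U + Cr) / Num.sqrt K.
Proof.
move=> K1 hu hr.
have K0 : 0 < K by exact: lt_le_trans ltr01 K1.
set sq := Num.sqrt K.
have sq0 : 0 < sq by rewrite sqrtr_gt0.
have sqK : sq * sq = K by rewrite -expr2 sqr_sqrtr // ltW.
have main : forall s, vdot s s <= U -> 2 * vdot s r <= (U + Cr) / sq.
  move=> s hs; have sqi : 0 < sq^-1 by rewrite invr_gt0.
  have := vdot_young s r sqi.
  rewrite invrK => h; apply: (le_trans h).
  have e1 : vdot r r * sq = K * vdot r r / sq by rewrite -sqK; field; rewrite gt_eqF.
  rewrite e1 mulrDl.
  have si : 0 <= sq^-1 by rewrite invr_ge0 ltW.
  have q1 : sq^-1 * vdot s s <= U / sq by rewrite mulrC; apply: ler_wpM2r.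
  have q2 : K * vdot r r / sq <= Cr / sq by apply: ler_wpM2r.
  lra.
have h1 := main u hu.
have h2 := main (- u); rewrite !(vdotNl, vdotNr) opprK in h2.
have h3 := h2 hu.
have := ler_norml (vdot u r) ((U + Cr) / sq / 2).
move=> E; rewrite mulrC -ler_pdivlMr // E; apply/andP; split; lra.
Qed.

Lemma sandwich (a c : R) (y : \bar R) : (a%:E <= y)%E -> (y <= c%:E)%E -> y = (fine y)%:E.
Proof. by case: y. Qed.

Lemma divK_sq (K X : R) : 1 <= K -> 0 <= X ->
  X / K <= X / Num.sqrt K /\ X / K ^+ 2 <= X / Num.sqrt K.
Proof.
move=> K1 X0; have K0 : 0 < K by exact: lt_le_trans ltr01 K1.
set sq := Num.sqrt K.
have sq1 : 1 <= sq by rewrite /sq -sqrtr1 ler_sqrt // ltW.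
have sq0 : 0 < sq by exact: lt_le_trans ltr01 sq1.
have sqK : sq * sq = K by rewrite -expr2 sqr_sqrtr // ltW.
have sqle : sq <= K by rewrite -sqK ler_peMr // ltW.
have KK : K <= K ^+ 2 by rewrite expr2 ler_peMr // ltW.
have i1 : K^-1 <= sq^-1 by rewrite lef_pV2 // posrE.
have i2 : (K ^+ 2)^-1 <= sq^-1 by rewrite lef_pV2 ?posrE ?exprn_gt0 // (le_trans sqle).
by split; apply: ler_wpM2l.
Qed.
End S.
Unset Implicit Arguments. Set Strict Implicit.

Theorem corollary1 (R : realType) (m n : nat) (A : 'M[R]_(m, n)) (b : 'cV[R]_m)
  (f : 'cV[R]_n -> R) (gf : 'cV[R]_n -> 'cV[R]_n) (g : 'cV[R]_n -> \bar R)
  (beta sigma : R) (xstar : 'cV[R]_n) (lamstar : 'cV[R]_m)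
  (x : nat -> 'cV[R]_n) (lam : nat -> 'cV[R]_m) :
  convex_fun f -> has_gradient f gf -> lipschitz_map gf ->
  proper_efun g -> convex_efun g -> closed_efun g -> bounded_dom g ->
  0 < beta ->
  (* x* is an optimal solution of min F(x) s.t. Ax = b *)
  A *m xstar = b ->
  (forall z, A *m z = b -> (Fobj f g xstar <= Fobj f g z)%E) ->
  (* lambda* maximizes d, with d(lambda* ) = F(x* ) *)
  (forall l, (dualfun f g A b beta l <= dualfun f g A b beta lamstar)%E) ->
  dualfun f g A b beta lamstar = Fobj f g xstar ->
  0 < sigma ->
  IAL_iterates f gf g A b beta (fun k => sigma / (k%:R ^+ 2)) x lam ->
  exists (C : R) (K : nat), forall k : nat, (K <= k)%N ->
    [/\ (`|dualfun f g A b beta lamstar - dualfun f g A b beta (lam k)| <= (C / k%:R)%:E)%E,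
        vdot (A *m x k.+1 - b) (A *m x k.+1 - b) <= C / k%:R
      & (`|Fobj f g (x k.+1) - Fobj f g xstar| <= (C / Num.sqrt k%:R)%:E)%E].
Proof.
move=> cf hg _ [gN [z0 z0f]] _ _ _ b0 _ _ dmax dstarE s0 [g1 Hit].
set D := dualfun f g A b beta.
have KF : forall k, (1 <= k)%N -> exists G, g (x k.+1) = G%:E /\
   (D (lam k) <= (fhat f A b beta (lam k) (x k.+1) + G)%:E)%E /\
   ((fhat f A b beta (lam k) (x k.+1) + G - sigma / k%:R ^+ 2)%:E <= D (lam k))%E /\
   ((f (x k.+1) + G + vdot (lam k.+1) (A *m x k.+1 - b) - sigma / k%:R ^+ 2)%:E
       <= D (lam k.+1))%E /\
   (D lamstar <= (fhat f A b beta lamstar (x k.+1) + G)%:E)%E.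
  move=> k k1; have [Hc Hl] := Hit k k1.
  have [G [gx [S2 S3]]] := step cf hg b0 gN (ex_intro _ z0 z0f) Hc.
  exists G; split => //; split; last split; last split.
  - by apply: ereal_inf_lbound; exists (x k.+1) => //; rewrite /augLag gx.
  - by apply: le_ereal_inf_tmp => _ [z _ <-]; exact: S2.
  - by rewrite Hl; apply: le_ereal_inf_tmp => _ [z _ <-]; exact: S3.
  - by apply: ereal_inf_lbound; exists (x k.+1) => //; rewrite /augLag gx.
have dfin : forall k, (1 <= k)%N -> D (lam k) = (fine (D (lam k)))%:E.
  move=> k k1; have [G [_ [h1 [h2 _]]]] := KF k k1; exact: sandwich h2 h1.
have sfin : D lamstar = (fine (D lamstar))%:E.
  have [G [_ [_ [h2 [_ h4]]]]] := KF 1%N isT.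
  exact: sandwich (le_trans h2 (dmax _)) h4.
set dk := fun k => fine (D (lam k)).
set dS := fine (D lamstar).
set e := fun k : nat => sigma / k%:R ^+ 2.
set r := fun k => A *m x k.+1 - b.
have RF : forall k, (1 <= k)%N -> exists G, g (x k.+1) = G%:E /\
  dk k <= f (x k.+1) + vdot (lam k) (r k) + beta / 2 * vdot (r k) (r k) + G /\
  f (x k.+1) + vdot (lam k) (r k) + beta / 2 * vdot (r k) (r k) + G - e k <= dk k /\
  f (x k.+1) + G + vdot (lam k) (r k) + beta * vdot (r k) (r k) - e k <= dk k.+1 /\
  dS <= f (x k.+1) + vdot lamstar (r k) + beta / 2 * vdot (r k) (r k) + G /\
  dk k <= dS /\ dk k.+1 <= dS.
  move=> k k1; have [G [gx [h1 [h2 [h3 h4]]]]] := KF k k1.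
  have [_ Hl] := Hit k k1.
  exists G; split => //.
  move: h1 h2 h3 h4; rewrite (dfin k k1) (dfin k.+1 isT) sfin.
  move=> h1 h2 h3 h4; rewrite !lee_fin in h1 h2 h3 h4.
  have d1 : (D (lam k) <= D lamstar)%E := dmax (lam k).
  have d2 : (D (lam k.+1) <= D lamstar)%E := dmax (lam k.+1).
  move: d1 d2; rewrite (dfin k k1) (dfin k.+1 isT) sfin => d1 d2.
  rewrite !lee_fin in d1 d2.
  move: h1 h2 h3 h4 d1 d2.
  have hv : vdot (lam k.+1) (A *m x k.+1 - b) = vdot (lam k) (A *m x k.+1 - b) +
     beta * vdot (A *m x k.+1 - b) (A *m x k.+1 - b) by rewrite Hl vdotDl vdotZl.
  rewrite hv /fhat.
  rewrite /dk /r /e /dS.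
  move: (sigma / k%:R ^+ 2) (fine (D (lam k))) (fine (D (lam k.+1))) (fine (D lamstar)) => ek a1 a2 a3.
  move=> h1 h2 h3 h4 d1 d2; repeat split; lra.
pose del := fun k => dS - dk k.
pose aa := fun k => vdot (lamstar - lam k) (lamstar - lam k) / (2 * beta).
pose ss := fun k => beta / 2 * vdot (r k) (r k).
have ident : forall k, (1 <= k)%N ->
  aa k - aa k.+1 = vdot lamstar (r k) - vdot (lam k) (r k) - beta / 2 * vdot (r k) (r k).
  move=> k k1; have [_ Hl] := Hit k k1.
  rewrite /aa /r Hl; move: (A *m x k.+1 - b) (lam k) (lamstar) => rr l ls.
  rewrite !(vdotBl, vdotBr, vdotDl, vdotDr, vdotZl, vdotZr).
  rewrite (vdotC rr ls) (vdotC rr l) (vdotC l ls).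
  by field; rewrite gt_eqF.
have p1 : forall k, (1 <= k)%N -> 0 <= del k.
  move=> k k1; have [G [_ [_ [_ [_ [_ [h _]]]]]]] := RF k k1; rewrite /del; lra.
have p2 : forall k, 0 <= aa k.
  by move=> k; apply: divr_ge0; [exact: vdot_ge0| apply: mulr_ge0 => //; apply: ltW].
have p3 : forall k, 0 <= ss k.
  by move=> k; apply: mulr_ge0; [apply: divr_ge0 => //; apply: ltW| exact: vdot_ge0].
have p4 : forall k, (1 <= k)%N -> del k.+1 <= del k - ss k + sigma / k%:R ^+ 2.
  move=> k k1; have [G [_ [h1 [h2 [h3 [h4 _]]]]]] := RF k k1.
  move: h1 h2 h3 h4; rewrite /del /ss /e.
  move: (sigma / k%:R ^+ 2) => ek; lra.
have p5 : forall k, (1 <= k)%N -> del k.+1 <= aa k - aa k.+1 + sigma / k%:R ^+ 2.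
  move=> k k1; have [G [_ [h1 [h2 [h3 [h4 _]]]]]] := RF k k1.
  rewrite (ident k k1).
  move: h1 h2 h3 h4; rewrite /del /ss /e.
  move: (sigma / k%:R ^+ 2) => ek; lra.
have [Ab [c [c0 [aB [dB sB]]]]] := seq_rates s0 p1 p2 p3 p4 p5.
have Ab0 : 0 <= Ab by apply: le_trans (p2 1%N) (aB 1%N isT).
pose Cr := 2 * c / beta.
have Cr0 : 0 <= Cr by apply: divr_ge0; [lra| apply: ltW].
pose U := 2 * vdot lamstar lamstar + 4 * beta * Ab.
have U0 : 0 <= U.
  have := vdot_ge0 lamstar; have : 0 <= beta * Ab by apply: mulr_ge0 => //; apply: ltW.
  rewrite /U; lra.
pose CF := sigma + U + Cr + beta * Cr.
have CF0 : 0 <= CF.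
  have : 0 <= beta * Cr by apply: mulr_ge0 => //; apply: ltW.
  rewrite /CF; lra.
exists (c + Cr + CF), 2%N => k k2.
have k1 : (1 <= k)%N by apply: leq_trans k2.
have K1 : 1 <= k%:R :> R by rewrite ler1n.
have K0 : 0 < k%:R :> R by rewrite ltr0n.
have [G [gx [h1 [h2 [h3 [h4 [h5 _]]]]]]] := RF k k1.
have hr : k%:R * vdot (r k) (r k) <= Cr.
  have := sB k k2; rewrite /ss /Cr ler_pdivlMr // => h; lra.
have hr' : vdot (r k) (r k) <= Cr / k%:R by rewrite ler_pdivlMr // mulrC.
split.
- rewrite sfin (dfin k k1) -EFinB abse_EFin lee_fin ger0_norm; last first.
    by have := p1 k k1; rewrite /del.
  rewrite ler_pdivlMr //; have := dB k k2; rewrite /del /dk /dS /=; lra.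
- by apply: (le_trans hr'); apply: ler_wpM2r; [rewrite invr_ge0 ltW| lra].
rewrite -dstarE -/D sfin /Fobj gx -EFinN -!EFinD abse_EFin lee_fin.
have hls : vdot lamstar lamstar <= U.
  have := vdot_ge0 lamstar; have : 0 <= beta * Ab by apply: mulr_ge0 => //; apply: ltW.
  rewrite /U; lra.
have hl : vdot (lam k) (lam k) <= U.
  have hw := aB k k1; rewrite /aa ler_pdivrMr in hw; last by rewrite mulr_gt0.
  have y := vdot_young (- lamstar) (lamstar - lam k) ltr01.
  have E : lam k = lamstar - (lamstar - lam k) by rewrite opprB addrC subrK.
  rewrite {1 2}E; move: hw y; move: (lamstar - lam k) => w.
  rewrite !(vdotBl, vdotBr, vdotNl, vdotNr) (vdotC w lamstar) divr1 mul1r /U; lra.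
have y1 := young_abs K1 hl hr.
have y2 := young_abs K1 hls hr.
have [q1 q2] := divK_sq K1 (ltW s0).
have [q3 _] := divK_sq K1 Cr0.
set sq := Num.sqrt k%:R in y1 y2 q1 q2 q3 *.
have sq0 : 0 < sq by rewrite sqrtr_gt0.
have vb : beta / 2 * vdot (r k) (r k) <= beta / 2 * (Cr / sq).
  by apply: ler_wpM2l; [apply: divr_ge0 => //; apply: ltW| exact: le_trans hr' q3].
have vb0 : 0 <= beta / 2 * vdot (r k) (r k) by exact: p3.
have n1 := ler_norm (vdot (lam k) (r k)).
have n2 := ler_norm (- vdot (lam k) (r k)); rewrite normrN in n2.
have n3 := ler_norm (vdot lamstar (r k)).
have main : `|f (x k.+1) + G - dS| <= CF / sq.
  have f1 : 0 <= U / sq by apply: divr_ge0 => //; apply: ltW.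
  have f4 : 0 <= sigma / sq by apply: divr_ge0; apply: ltW.
  have f2 : 0 <= Cr / sq by apply: divr_ge0 => //; apply: ltW.
  have f3 : 0 <= beta * Cr / sq.
    by apply: divr_ge0; [apply: mulr_ge0 => //; apply: ltW| apply: ltW].
  move: h2 h4 h5 q2 vb; rewrite /e /CF; clearbody U Cr sq.
  move: (sigma / k%:R ^+ 2) (dk k) => ek dkk.
  move=> *.
  rewrite ler_norml; apply/andP; split; lra.
apply: (le_trans main); apply: ler_wpM2r; [by rewrite invr_ge0 ltW| lra].
Qed.
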